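(* Let $\mathcal{C}_{\mathrm{tr}}$ be the class of all transitive permutation groups. Then \[ \lim_{n} \frac{\mathbf{F}_{\mathcal{C}_{\mathrm{tr}}}(n)}{n} = \frac{1}{2}. \]
   Context: For a transitive permutation group $G$ on a finite set $\Omega$ with $|\Omega|\ge 2$, a subset $A\subseteq\Omega$ is self-separable for $G$ if there exists $g\in G$ with $A\cap A^g=\emptyset$; $\mathbf{m}(G)$ is the minimum cardinality of a subset of $\Omega$ that is not self-separable for $G$. For a family $\mathcal{C}$ of transitive permutation groups, $\mathcal{C}_n$ is the set of members of degree $n$, $X_{\mathcal{C}}=\{n:\mathcal{C}_n\ne\emptyset\}$, and $\mathbf{F}_{\mathcal{C}}:X_{\mathcal{C}}\to\mathbb{N}$, $n\mapsto\max\{\mathbf{m}(G):G\in\mathcal{C}_n\}$. *)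

(* Defs.v *)
From mathcomp Require Import all_boot all_fingroup.
From Stdlib Require Import Reals.
Set Implicit Arguments. Unset Strict Implicit. Unset Printing Implicit Defensive.
Local Open Scope group_scope.

(* Permutation groups of degree n are subgroups of Sym('I_n); every permutation
   group of degree n is permutation-isomorphic to one of these, and m(G) is
   invariant under permutation isomorphism. *)

Definition self_separable n (G : {group {perm 'I_n}}) (A : {set 'I_n}) : bool :=
  [exists g in G, A :&: [set g x | x in A] == set0].

(* The whole set
   [set: 'I_n] (of size n) is never self-separable when n > 0, so the default
   value n of the fold never exceeds the true minimum. *)
Definition mG n (G : {group {perm 'I_n}}) : nat :=
  \big[minn/n]_(A : {set 'I_n} | ~~ self_separable G A) #|A|.

Definition transitive_grp n (G : {group {perm 'I_n}}) : bool :=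
  [transitive G, on [set: 'I_n] | 'P].

Definition Ftr n : nat :=
  \max_(G : {group {perm 'I_n}} | transitive_grp G) mG G.

(* Main.v *)
Require Import Defs.
From mathcomp Require Import all_boot all_fingroup.
From mathcomp Require Import zify.
Set Implicit Arguments. Unset Strict Implicit. Unset Printing Implicit Defensive.

Lemma sep_perm n (A : {set 'I_n}) : 2 * #|A| <= n ->
  exists g : {perm 'I_n}, A :&: [set g x | x in A] == set0.
Proof.
move=> hA.
have hC : #|A| <= #|~: A|.
  have := cardsC A; rewrite card_ord; lia.
pose s := enum A ++ enum (~: A); pose r := enum (~: A) ++ enum A.
have ins : forall x, x \in s.
  by move=> x; rewrite mem_cat !mem_enum inE; case: (x \in A).
have ur : uniq r.
  rewrite cat_uniq !enum_uniq andbT /=; apply/hasPn => x.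
  by rewrite !mem_enum inE => ->.
have szr : size r = size s by rewrite !size_cat addnC.
pose f x := nth x r (index x s).
have finj : injective f.
  move=> x y; rewrite /f => e.
  have hx : index x s < size r by rewrite szr index_mem.
  have hy : index y s < size r by rewrite szr index_mem.
  move: e; rewrite (set_nth_default x y hy) => /eqP.
  rewrite nth_uniq // => /eqP e.
  by rewrite -(nth_index x (ins x)) e nth_index.
exists (perm finj).
have fA : forall x, x \in A -> f x \notin A.
  move=> x xA; rewrite /f index_cat mem_enum xA nth_cat.
  have hi : index x (enum A) < size (enum (~: A)).
    rewrite -cardE; apply: leq_trans hC; rewrite cardE index_mem mem_enum //.
  rewrite hi.
  have := mem_nth x hi; rewrite mem_enum inE //.
apply/eqP/setP => y; rewrite !inE; apply/negbTE/negP => /andP [yA /imsetP [x xA ey]].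
by move: yA; rewrite ey permE => yA; move: (fA x xA); rewrite yA.
Qed.

Lemma bigmin_le_seq (I : eqType) (s : seq I) (F : I -> nat) x i0 :
  i0 \in s -> \big[minn/x]_(i <- s) F i <= F i0.
Proof.
elim: s => // a s IH; rewrite inE big_cons => /orP [/eqP-> | h].
  exact: geq_minl.
exact: leq_trans (geq_minr _ _) (IH h).
Qed.

Lemma mG_ub n (G : {group {perm 'I_n}}) : 0 < n -> mG G <= (n %/ 2).+1.
Proof.
move=> n0.
have hk : (n %/ 2).+1 <= n by lia.
pose A := [set widen_ord hk i | i : 'I_(n %/ 2).+1].
have cA : #|A| = (n %/ 2).+1 by rewrite card_imset ?card_ord //; by move=> i j /(congr1 val) /= /val_inj.
have nsA : ~~ self_separable G A.
  apply/negP => /existsP [g /andP [_ /eqP e]].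
  have := cardsUI A [set g x | x in A].
  rewrite e cards0 addn0 (card_imset _ (@perm_inj _ g)).
  have := max_card (A :|: [set g x | x in A]); rewrite card_ord cA; lia.
rewrite /mG -big_filter -cA; apply: bigmin_le_seq.
by rewrite mem_filter nsA mem_index_enum.
Qed.

Lemma mG_lb n : 0 < n -> (n %/ 2).+1 <= mG [set: {perm 'I_n}]%G.
Proof.
move=> n0; rewrite /mG; apply: (big_ind (fun m => (n %/ 2).+1 <= m)).
- lia.
- by move=> x y hx hy; rewrite leq_min hx hy.
move=> A nsA; rewrite ltnNge; apply/negP => hA.
have [g eg] := sep_perm (A := A) (ltac:(lia)).
by move/negP: nsA; apply; apply/existsP; exists g; rewrite inE eg.
Qed.

Lemma transT n : 0 < n -> transitive_grp [set: {perm 'I_n}]%G.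
Proof.
move=> n0; rewrite /transitive_grp; apply/imsetP.
exists (Ordinal n0); first by rewrite inE.
apply/setP => y; rewrite inE; apply/esym/orbitP.
by exists (tperm (Ordinal n0) y); rewrite ?inE //= apermE tpermL.
Qed.

Lemma Ftr_eq n : 0 < n -> Ftr n = (n %/ 2).+1.
Proof.
move=> n0; apply/eqP; rewrite eqn_leq; apply/andP; split.
  by apply/bigmax_leqP => G _; apply: mG_ub.
apply: leq_trans (mG_lb n0) _.
rewrite /Ftr; exact: (@leq_bigmax_cond _ (fun G => transitive_grp G) (fun G => mG G) _ (transT n0)).
Qed.

Lemma Ftr_eq' n : (0 < n)%coq_nat -> Ftr n = S (n %/ 2).
Proof. by move=> h; apply: Ftr_eq; apply/ltP. Qed.

Lemma half_bounds n : (2 * (n %/ 2) <= n)%coq_nat /\ (n <= 2 * (n %/ 2) + 1)%coq_nat.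
Proof. split; apply/leP; lia. Qed.

From Stdlib Require Import Reals Lra Psatz.

Theorem theoremB :
  Un_cv (fun n : nat => (INR (Ftr n) / INR n)%R) (1 / 2)%R.
Proof.
intros eps Heps.
destruct (archimed_cor1 eps Heps) as [N [HN HN0]].
exists N; intros n Hn; unfold R_dist.
assert (n0 : (0 < n)%coq_nat) by lia.
rewrite (Ftr_eq' n0).
destruct (half_bounds n) as [h1 h2].
apply le_INR in h1; apply le_INR in h2.
rewrite mult_INR in h1; rewrite plus_INR mult_INR in h2.
rewrite S_INR.
assert (HNn : (INR N <= INR n)%R) by (apply le_INR; lia).
assert (HN0' : (0 < INR N)%R) by (apply lt_0_INR; lia).
set (a := INR (n %/ 2)) in *.
set (m := INR n) in *.
simpl in h1, h2.
assert (Hm : (0 < m)%R) by lra.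
assert (Hi : (/ m <= / INR N)%R) by (apply Rinv_le_contravar; lra).
assert (Hmi : (m * / m = 1)%R) by (field; lra).
assert (Hip : (0 < / m)%R) by (apply Rinv_0_lt_compat; lra).
set (i := (/ m)%R) in *.
unfold Rdiv; fold i.
assert (E : ((a + 1) * i - 1 * / 2 = i * (2 * a + 2 - m) / 2)%R) by nra.
rewrite E.
assert (B1 : (0 <= i * (2 * a + 2 - m))%R) by (apply Rmult_le_pos; lra).
assert (B2 : (i * (2 * a + 2 - m) <= i * 2)%R) by (apply Rmult_le_compat_l; lra).
rewrite Rabs_pos_eq; lra.
Qed.
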